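(* Model $\mathbb{H}^2\times\mathbb{R}$ as $\{(x_1,x_2,x_3,x_4)\in\mathbb{L}^4:-x_1^2+x_2^2+x_3^2=-1,\ x_1>0\}$. Let $K>0$ be a constant and let $S$ be a complete immersed sphere of revolution about the vertical axis $\{(1,0,0)\}\times\mathbb{R}$ with constant extrinsic curvature $K$, parametrized by $\psi_K(u,v)=(\cosh k(u),\sinh k(u)\cos v,\sinh k(u)\sin v,h(u))$ with generating curve $\alpha(u)=(\cosh k(u),\sinh k(u),0,h(u))$, where $k\ge0$ and the parameter $u$ equals $dk/ds$ for $s$ the arc length of the profile curve (oriented so that $s=0$ is the lowest point). Then $S$ is embedded, and for $-1\le u\le1$, $$k(u)=\cosh^{-1}\exp\!\left(\frac{1-u^2}{2K}\right),\qquad h(u)=-\frac1K\int_1^u\frac{\sqrt{1-w^2}}{\sqrt{1-\exp\!\left(-\frac{1-w^2}{K}\right)}}\,dw+C$$ for some real constant $C$. Moreover, the slice $\mathbb{H}^2\times\{h_0\}$ with $h_0=\frac1K\int_{-1}^0\frac{\sqrt{1-w^2}}{\sqrt{1-\exp(-\frac{1-w^2}{K})}}\,dw+C$ divides $S$ into two symmetric (upper and lower) parts.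
   Context: $\mathbb{L}^4$ is $\mathbb{R}^4$ with the metric $-dx_1^2+dx_2^2+dx_3^2+dx_4^2$; the induced metric on the given submanifold is the product metric of $\mathbb{H}^2\times\mathbb{R}$. The extrinsic curvature of a surface is $K=\det(II)/\det(I)$. *)

(* Defs.v *)
From Stdlib Require Import Reals.
Open Scope R_scope.

Record R4 := mkR4 { c1 : R; c2 : R; c3 : R; c4 : R }.

Definition lor (p q : R4) : R :=
  - c1 p * c1 q + c2 p * c2 q + c3 p * c3 q + c4 p * c4 q.

Definition arccosh (x : R) : R := ln (x + sqrt (x ^ 2 - 1)).

Definition psi (k h : R -> R) (s v : R) : R4 :=
  mkR4 (cosh (k s)) (sinh (k s) * cos v) (sinh (k s) * sin v) (h s).

Definition dS (F G : R -> R -> R4) (s v : R) : Prop :=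
  derivable_pt_lim (fun t => c1 (F t v)) s (c1 (G s v)) /\
  derivable_pt_lim (fun t => c2 (F t v)) s (c2 (G s v)) /\
  derivable_pt_lim (fun t => c3 (F t v)) s (c3 (G s v)) /\
  derivable_pt_lim (fun t => c4 (F t v)) s (c4 (G s v)).

Definition dV (F G : R -> R -> R4) (s v : R) : Prop :=
  derivable_pt_lim (fun t => c1 (F s t)) v (c1 (G s v)) /\
  derivable_pt_lim (fun t => c2 (F s t)) v (c2 (G s v)) /\
  derivable_pt_lim (fun t => c3 (F s t)) v (c3 (G s v)) /\
  derivable_pt_lim (fun t => c4 (F s t)) v (c4 (G s v)).

(* N is a unit normal to the surface at p (with tangent vectors Fs, Fv) which is
   tangent to H^2 x R at p:  <N, (p1,p2,p3,0)> = 0. *)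
Definition unit_normal_HxR (p Fs Fv N : R4) : Prop :=
  - c1 N * c1 p + c2 N * c2 p + c3 N * c3 p = 0 /\
  lor N Fs = 0 /\ lor N Fv = 0 /\ lor N N = 1.

Definition ext_curvature_const (F : R -> R -> R4) (D : R -> R -> Prop) (K0 : R) : Prop :=
  exists Fs Fv Fss Fsv Fvv : R -> R -> R4,
    (forall s v, D s v ->
       dS F Fs s v /\ dV F Fv s v /\ dS Fs Fss s v /\ dS Fv Fsv s v /\ dV Fv Fvv s v) /\
    (forall s v N, D s v -> unit_normal_HxR (F s v) (Fs s v) (Fv s v) N ->
       let E := lor (Fs s v) (Fs s v) in
       let Fm := lor (Fs s v) (Fv s v) in
       let G := lor (Fv s v) (Fv s v) in
       let e := lor (Fss s v) N in
       let f := lor (Fsv s v) N in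
       let g := lor (Fvv s v) N in
       (e * g - f * f) / (E * G - Fm * Fm) = K0).

Definition reflect_slice (h0 : R) (p : R4) : R4 :=
  mkR4 (c1 p) (c2 p) (c3 p) (2 * h0 - c4 p).

Definition hint (K w : R) : R :=
  sqrt (1 - w ^ 2) / sqrt (1 - exp (- ((1 - w ^ 2) / K))).

(* Main.v *)
From Stdlib Require Import Reals ZArith Lra Lia Psatz FunctionalExtensionality.
From Stdlib Require Import RList RiemannInt_SF RiemannInt Ranalysis5.
Require Import Defs.
Open Scope R_scope.

Lemma ch_sh x : cosh x ^ 2 - sinh x ^ 2 = 1.
Proof.
  unfold cosh, sinh.
  assert (H : exp x * exp (- x) = 1).
  { rewrite <- exp_plus. replace (x + - x) with 0 by ring. apply exp_0. }
  set (a := exp x) in *; set (b := exp (-x)) in *.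
  replace ((a + b) / 2) with ((a+b)*/2) by reflexivity.
  replace ((a - b) / 2) with ((a-b)*/2) by reflexivity.
  nra.
Qed.

Lemma cosh_pos x : 0 < cosh x.
Proof. unfold cosh. generalize (exp_pos x) (exp_pos (-x)). lra. Qed.

Lemma sinh_pos x : 0 < x -> 0 < sinh x.
Proof. intro H. rewrite <- sinh_0. apply sinh_lt. exact H. Qed.

Lemma sinh_nneg x : 0 <= x -> 0 <= sinh x.
Proof. intros [H|H]. left; apply sinh_pos; auto. subst; rewrite sinh_0; lra. Qed.

Lemma cosh_ge1 x : 1 <= cosh x.
Proof. generalize (ch_sh x) (cosh_pos x). nra. Qed.

Lemma cosh_gt1 x : 0 < x -> 1 < cosh x.
Proof. intro H. generalize (ch_sh x) (cosh_pos x) (sinh_pos x H). nra. Qed.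

Lemma arccosh_cosh x : 0 <= x -> arccosh (cosh x) = x.
Proof.
  intro H. unfold arccosh.
  replace (cosh x ^ 2 - 1) with (sinh x ^ 2) by (generalize (ch_sh x); lra).
  rewrite sqrt_pow2 by (apply sinh_nneg; auto).
  replace (cosh x + sinh x) with (exp x) by (unfold cosh, sinh; field).
  apply ln_exp.
Qed.

Lemma D_mult f g x a b : derivable_pt_lim f x a -> derivable_pt_lim g x b ->
  derivable_pt_lim (fun t => f t * g t) x (a * g x + f x * b).
Proof. intros H1 H2. exact (derivable_pt_lim_mult f g x a b H1 H2). Qed.

Lemma D_plus f g x a b : derivable_pt_lim f x a -> derivable_pt_lim g x b ->
  derivable_pt_lim (fun t => f t + g t) x (a + b).
Proof. intros H1 H2. exact (derivable_pt_lim_plus f g x a b H1 H2). Qed.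

Lemma D_minus f g x a b : derivable_pt_lim f x a -> derivable_pt_lim g x b ->
  derivable_pt_lim (fun t => f t - g t) x (a - b).
Proof. intros H1 H2. exact (derivable_pt_lim_minus f g x a b H1 H2). Qed.

Lemma D_opp f x a : derivable_pt_lim f x a ->
  derivable_pt_lim (fun t => - f t) x (- a).
Proof. intros H1. exact (derivable_pt_lim_opp f x a H1). Qed.

Lemma D_const c x : derivable_pt_lim (fun _ => c) x 0.
Proof. exact (derivable_pt_lim_const c x). Qed.

Lemma D_id x : derivable_pt_lim (fun t => t) x 1.
Proof. exact (derivable_pt_lim_id x). Qed.

Lemma D_comp f g x a b : derivable_pt_lim f x a -> derivable_pt_lim g (f x) b ->
  derivable_pt_lim (fun t => g (f t)) x (b * a).
Proof. intros H1 H2. exact (derivable_pt_lim_comp f g x a b H1 H2). Qed.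

Lemma D_div f g x a b : derivable_pt_lim f x a -> derivable_pt_lim g x b -> g x <> 0 ->
  derivable_pt_lim (fun t => f t / g t) x ((a * g x - b * f x) / (g x)^2).
Proof. intros H1 H2 H3. replace ((g x)^2) with (Rsqr (g x)) by (unfold Rsqr; ring).
  exact (derivable_pt_lim_div f g x a b H1 H2 H3). Qed.

Lemma D_val f x a b : derivable_pt_lim f x a -> a = b -> derivable_pt_lim f x b.
Proof. intros H ->; exact H. Qed.

Lemma D_loc f g x a b l : a < x < b -> (forall z, a < z < b -> f z = g z) ->
  derivable_pt_lim f x l -> derivable_pt_lim g x l.
Proof. apply derivable_pt_lim_locally_ext. Qed.

Lemma D_uniq f x a b : derivable_pt_lim f x a -> derivable_pt_lim f x b -> a = b.
Proof. apply uniqueness_limite. Qed.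

Lemma D_cont f x a : derivable_pt_lim f x a -> continuity_pt f x.
Proof. intro H. apply derivable_continuous_pt. exists a. exact H. Qed.

Lemma D_sq f x a : derivable_pt_lim f x a ->
  derivable_pt_lim (fun t => f t ^ 2) x (2 * f x * a).
Proof. intro H.
  assert (E : (fun t => f t ^ 2) = (fun t => f t * f t)) by (apply functional_extensionality; intro; ring).
  rewrite E. eapply D_val. apply (D_mult f f); exact H. ring. Qed.

Lemma const_open f a b : (forall x, a < x < b -> derivable_pt_lim f x 0) ->
  forall x y, a < x < b -> a < y < b -> f x = f y.
Proof.
  intros H x y Hx Hy.
  destruct (Rtotal_order x y) as [Hxy|[Hxy|Hxy]].
  - destruct (MVT_cor2 f (fun _ => 0) x y Hxy) as [c [Hc _]].
    + intros c Hc. apply H. lra.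
    + lra.
  - subst; reflexivity.
  - destruct (MVT_cor2 f (fun _ => 0) y x Hxy) as [c [Hc _]].
    + intros c Hc. apply H. lra.
    + lra.
Qed.

Lemma lim_ge_right f x0 L m : continuity_pt f x0 -> 0 < L ->
  (forall s, x0 < s < x0 + L -> m <= f s) -> m <= f x0.
Proof.
  intros Hc HL H.
  destruct (Rle_lt_dec m (f x0)) as [|Hlt]; [auto|exfalso].
  destruct (Hc (m - f x0)) as [d [Hd Hd']]; [lra|].
  set (s := x0 + Rmin (d/2) (L/2)).
  assert (Hs1 : 0 < Rmin (d/2) (L/2)) by (apply Rmin_pos; lra).
  assert (Hs2 : Rmin (d/2) (L/2) <= d/2) by apply Rmin_l.
  assert (Hs3 : Rmin (d/2) (L/2) <= L/2) by apply Rmin_r.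
  assert (Hm := H s ltac:(unfold s; lra)).
  assert (Hd2 := Hd' s).
  simpl in Hd2. unfold R_dist in Hd2.
  assert (Hr : Rabs (s - x0) < d) by (unfold s; rewrite Rabs_right; lra).
  assert (Hne : x0 <> s) by (unfold s; lra).
  specialize (Hd2 (conj (conj I Hne) Hr)).
  apply Rabs_def2 in Hd2. lra.
Qed.

Lemma lim_ge_left f x0 L m : continuity_pt f x0 -> 0 < L ->
  (forall s, x0 - L < s < x0 -> m <= f s) -> m <= f x0.
Proof.
  intros Hc HL H.
  destruct (Rle_lt_dec m (f x0)) as [|Hlt]; [auto|exfalso].
  destruct (Hc (m - f x0)) as [d [Hd Hd']]; [lra|].
  set (s := x0 - Rmin (d/2) (L/2)).
  assert (Hs1 : 0 < Rmin (d/2) (L/2)) by (apply Rmin_pos; lra).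
  assert (Hs2 : Rmin (d/2) (L/2) <= d/2) by apply Rmin_l.
  assert (Hs3 : Rmin (d/2) (L/2) <= L/2) by apply Rmin_r.
  assert (Hm := H s ltac:(unfold s; lra)).
  assert (Hd2 := Hd' s).
  simpl in Hd2. unfold R_dist in Hd2.
  assert (Hr : Rabs (s - x0) < d) by (unfold s; rewrite Rabs_left; lra).
  assert (Hne : x0 <> s) by (unfold s; lra).
  specialize (Hd2 (conj (conj I Hne) Hr)).
  apply Rabs_def2 in Hd2. lra.
Qed.

Lemma deriv_sq_bound f l L c : derivable_pt_lim f 0 l -> f 0 = 0 -> 0 < L ->
  (forall s, 0 < s < L -> (f s / s) ^ 2 <= c) -> l ^ 2 <= c.
Proof.
  intros Hd Hf0 HL H.
  destruct (Rle_lt_dec (l^2) c) as [|Hlt]; [auto|exfalso].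
  set (eps := Rmin 1 ((l^2 - c) / (2 * Rabs l + 1))).
  assert (He1 : 0 < eps).
  { apply Rmin_pos; [lra|]. apply Rdiv_lt_0_compat; [lra|]. generalize (Rabs_pos l); lra. }
  destruct (Hd eps He1) as [d Hd'].
  set (s := Rmin (d/2) (L/2)).
  assert (Hdp := cond_pos d).
  assert (Hs1 : 0 < s) by (apply Rmin_pos; lra).
  assert (Hs2 : s <= d/2) by apply Rmin_l.
  assert (Hs3 : s <= L/2) by apply Rmin_r.
  assert (Hq := Hd' s ltac:(lra) ltac:(rewrite Rabs_right; lra)).
  replace (0 + s) with s in Hq by ring. rewrite Hf0 in Hq.
  replace ((f s - 0) / s) with (f s / s) in Hq by (field; lra).
  assert (Hb := H s ltac:(lra)).
  set (q := f s / s) in *.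
  assert (Hq1 : Rabs (q - l) < 1) by (apply Rlt_le_trans with eps; [exact Hq| apply Rmin_l]).
  assert (Hq2 : Rabs (q - l) < (l^2 - c) / (2 * Rabs l + 1)) by (apply Rlt_le_trans with eps; [exact Hq| apply Rmin_r]).
  assert (Hpos : 0 < 2 * Rabs l + 1) by (generalize (Rabs_pos l); lra).
  assert (Hq3 : Rabs (q - l) * (2 * Rabs l + 1) < l^2 - c).
  { apply Rmult_lt_reg_r with (/ (2 * Rabs l + 1)). apply Rinv_0_lt_compat; lra.
    rewrite Rmult_assoc, Rinv_r by lra. rewrite Rmult_1_r. exact Hq2. }
  assert (Hqq : Rabs (q + l) <= 2 * Rabs l + 1).
  { replace (q + l) with ((q - l) + 2 * l) by ring.
    eapply Rle_trans; [apply Rabs_triang|]. rewrite Rabs_mult, (Rabs_right 2) by lra. lra. }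
  assert (Hdiff : Rabs (l^2 - q^2) < l^2 - c).
  { replace (l^2 - q^2) with (-(q - l) * (q + l)) by ring.
    rewrite Rabs_mult, Rabs_Ropp.
    eapply Rle_lt_trans; [|exact Hq3]. apply Rmult_le_compat_l; [apply Rabs_pos|exact Hqq]. }
  apply Rabs_def2 in Hdiff. lra.
Qed.

Lemma cont_get f x0 : continuity_pt f x0 -> forall eps, 0 < eps ->
  exists d, 0 < d /\ forall x, Rabs (x - x0) < d -> Rabs (f x - f x0) < eps.
Proof.
  intros Hc eps He. destruct (Hc eps He) as [d [Hd Hd']].
  exists d; split; [lra|]. intros x Hx.
  destruct (Req_dec x0 x) as [<-|Hne].
  - replace (f x0 - f x0) with 0 by ring. rewrite Rabs_R0; lra.
  - apply (Hd' x). split; [split; [exact I|exact Hne]|exact Hx].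
Qed.

Lemma cont_mk f x0 : (forall eps, 0 < eps ->
  exists d, 0 < d /\ forall x, Rabs (x - x0) < d -> Rabs (f x - f x0) < eps) -> continuity_pt f x0.
Proof.
  intros H eps He. destruct (H eps He) as [d [Hd Hd']].
  exists d; split; [lra|]. intros x [_ Hx]. apply Hd'. exact Hx.
Qed.

Lemma C_plus f g x : continuity_pt f x -> continuity_pt g x -> continuity_pt (fun t => f t + g t) x.
Proof. intros H1 H2. exact (continuity_pt_plus f g x H1 H2). Qed.
Lemma C_minus f g x : continuity_pt f x -> continuity_pt g x -> continuity_pt (fun t => f t - g t) x.
Proof. intros H1 H2. exact (continuity_pt_minus f g x H1 H2). Qed.
Lemma C_mult f g x : continuity_pt f x -> continuity_pt g x -> continuity_pt (fun t => f t * g t) x.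
Proof. intros H1 H2. exact (continuity_pt_mult f g x H1 H2). Qed.
Lemma C_const c x : continuity_pt (fun _ => c) x.
Proof. exact (continuity_pt_const (fun _ => c) x (fun _ _ => eq_refl)). Qed.

Lemma RI_endpoints f g a b : Riemann_integrable f a b ->
  (forall x, Rmin a b < x < Rmax a b -> f x = g x) -> Riemann_integrable g a b.
Proof.
  intros pr Heq eps.
  destruct (pr eps) as [phi [psi [H1 H2]]].
  destruct phi as [phif [l [lf Had]]].
  assert (Had' : adapted_couple (fun t => phif t + (g t - f t)) a b l lf).
  { destruct Had as [Ho [Hl0 [Hln [Hlen Hc]]]].
    repeat split; auto.
    intros i Hi x Hx. unfold open_interval in Hx.
    rewrite (Hc i Hi x Hx).
    assert (A1 : pos_Rl l 0 <= pos_Rl l i).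
    { apply RList_P5; auto. apply RList_P3. exists i; split; auto. lia. }
    assert (A2 : pos_Rl l (S i) <= pos_Rl l (pred (length l))).
    { apply RList_P7; auto. apply RList_P3. exists (S i); split; auto. lia. }
    rewrite (Heq x). ring. rewrite <- Hl0, <- Hln. lra. }
  exists (mkStepFun (existT _ l (existT _ lf Had'))). exists psi. split; auto.
  intros t Ht. simpl. replace (g t - (phif t + (g t - f t))) with (f t - phif t) by ring.
  apply H1. exact Ht.
Qed.

Lemma C_comp f g x : continuity_pt f x -> continuity_pt g (f x) ->
  continuity_pt (fun t => g (f t)) x.
Proof. intros H1 H2. exact (continuity_pt_comp f g x H1 H2). Qed.

Definition qf x := if Req_EM_T x 0 then 1 else (1 - exp (- x)) / x.

Lemma qf_pos x : 0 < qf x.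
Proof.
  unfold qf. destruct (Req_EM_T x 0) as [_|H]; [lra|].
  destruct (Rtotal_order x 0) as [Hx|[Hx|Hx]]; [|contradiction|].
  - assert (1 < exp (-x)) by (rewrite <- exp_0; apply exp_increasing; lra).
    apply Rdiv_neg_neg; lra.
  - assert (exp (-x) < 1) by (rewrite <- exp_0; apply exp_increasing; lra).
    apply Rdiv_lt_0_compat; lra.
Qed.

Lemma D_one_m_exp x : derivable_pt_lim (fun y => 1 - exp (- y)) x (exp (- x)).
Proof.
  eapply D_val. apply D_minus. apply D_const.
  apply (D_comp (fun y => - y) exp). apply D_opp. apply D_id. apply derivable_pt_lim_exp. ring.
Qed.

Lemma qf_cont x : continuity_pt qf x.
Proof.
  destruct (Req_EM_T x 0) as [->|Hx].
  - apply cont_mk. intros eps He.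
    destruct (D_one_m_exp 0 eps He) as [d Hd].
    exists d. split. apply cond_pos. intros y Hy.
    unfold qf at 2. destruct (Req_EM_T 0 0) as [_|]; [|lra].
    unfold qf. destruct (Req_EM_T y 0) as [->|Hy0].
    + replace (1 - 1) with 0 by ring. rewrite Rabs_R0. lra.
    + replace (y - 0) with y in Hy by ring.
      specialize (Hd y Hy0 Hy). simpl in Hd.
      replace (0 + y) with y in Hd by ring. rewrite Ropp_0, exp_0 in Hd.
      replace ((1 - exp (- y) - (1 - 1)) / y - 1) with ((1 - exp (- y)) / y - 1) in Hd by (field; auto).
      exact Hd.
  - apply continuity_pt_locally_ext with (f := fun y => (1 - exp (- y)) / y) (a := Rabs x).
    + apply Rabs_pos_lt; auto.
    + intros y Hy. unfold qf. destruct (Req_EM_T y 0) as [->|]; [|reflexivity].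
      exfalso. unfold Rdist in Hy. rewrite Rabs_minus_sym, Rminus_0_r in Hy. lra.
    + eapply D_cont. apply D_div. apply D_one_m_exp. apply D_id. exact Hx.
Qed.

Definition gK K w := sqrt (K / qf ((1 - w ^ 2) / K)).

Lemma gK_cont K w : 0 < K -> continuity_pt (gK K) w.
Proof.
  intro HK. unfold gK.
  apply (C_comp (fun w => K / qf ((1 - w ^ 2) / K)) sqrt).
  - apply (C_comp (fun w => qf ((1 - w ^ 2) / K)) (fun y => K / y)).
    + apply (C_comp (fun w => (1 - w ^ 2) / K) qf).
      * eapply D_cont. apply D_div. apply D_minus. apply D_const. apply D_sq. apply D_id.
        apply D_const. lra.
      * apply qf_cont.
    + eapply D_cont. apply D_div. apply D_const. apply D_id. generalize (qf_pos ((1 - w ^ 2) / K)); lra.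
  - apply continuity_pt_sqrt. apply Rlt_le, Rdiv_lt_0_compat; auto. apply qf_pos.
Qed.

Lemma gK_hint K w : 0 < K -> -1 < w < 1 -> gK K w = hint K w.
Proof.
  intros HK Hw. unfold gK, hint, qf.
  set (t := 1 - w ^ 2). assert (Ht : 0 < t) by (unfold t; nra).
  destruct (Req_EM_T (t / K) 0) as [E|_].
  - exfalso. assert (0 < t / K) by (apply Rdiv_lt_0_compat; auto). lra.
  - assert (Hy : 0 < 1 - exp (- (t / K))).
    { assert (exp (- (t / K)) < 1). rewrite <- exp_0; apply exp_increasing.
      assert (0 < t / K) by (apply Rdiv_lt_0_compat; auto). lra. lra. }
    rewrite <- sqrt_div by lra. f_equal. field. split; lra.
Qed.

Lemma gK_even K w : gK K (- w) = gK K w.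
Proof. unfold gK. replace ((- w) ^ 2) with (w ^ 2) by ring. reflexivity. Qed.

Lemma gK_nneg K w : 0 <= gK K w.
Proof. apply sqrt_pos. Qed.

Lemma m2le2 : -2 <= 2.
Proof. lra. Qed.

Definition Gp K (HK : 0 < K) : R -> R :=
  primitive m2le2 (FTC_P1 m2le2 (fun x _ => gK_cont K x HK)).

Lemma Gp_deriv K HK w : -2 <= w <= 2 -> derivable_pt_lim (Gp K HK) w (gK K w).
Proof. intro Hw. unfold Gp. apply RiemannInt_P28. exact Hw. Qed.

Lemma Gp_val K HK u (pr : Riemann_integrable (gK K) (-2) u) : -2 <= u <= 2 -> Gp K HK u = RiemannInt pr.
Proof.
  intro Hu. unfold Gp, primitive.
  destruct (Rle_dec (-2) u) as [r|]; [|lra]. destruct (Rle_dec u 2) as [r0|]; [|lra].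
  apply RiemannInt_P5.
Qed.

Lemma Gp_int K HK u1 u2 (pr : Riemann_integrable (gK K) u1 u2) :
  -2 <= u1 <= 2 -> -2 <= u2 <= 2 -> RiemannInt pr = Gp K HK u2 - Gp K HK u1.
Proof.
  intros H1 H2.
  set (pr1 := FTC_P1 m2le2 (fun x _ => gK_cont K x HK) (proj1 H1) (proj2 H1)).
  set (pr3 := FTC_P1 m2le2 (fun x _ => gK_cont K x HK) (proj1 H2) (proj2 H2)).
  rewrite (Gp_val K HK u1 pr1 H1), (Gp_val K HK u2 pr3 H2).
  rewrite <- (RiemannInt_P26 pr1 pr pr3). ring.
Qed.

Lemma gK_int K (HK : 0 < K) a b : Riemann_integrable (gK K) a b.
Proof.
  destruct (Rle_dec a b) as [H|H].
  - apply continuity_implies_RiemannInt; auto. intros; apply gK_cont; auto.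
  - apply RiemannInt_P1. apply continuity_implies_RiemannInt; [lra|]. intros; apply gK_cont; auto.
Qed.

Lemma hint_int K (HK : 0 < K) a b : -1 <= a <= 1 -> -1 <= b <= 1 -> Riemann_integrable (hint K) a b.
Proof.
  intros Ha Hb. apply RI_endpoints with (gK K). apply gK_int; auto.
  intros x Hx. apply gK_hint; auto.
  split.
  - apply Rle_lt_trans with (Rmin a b); [|lra]. apply Rmin_glb; lra.
  - apply Rlt_le_trans with (Rmax a b); [lra|]. apply Rmax_lub; lra.
Qed.

Lemma hint_val_le K (HK : 0 < K) a b (pr : Riemann_integrable (hint K) a b) :
  -1 <= a <= 1 -> -1 <= b <= 1 -> a <= b -> RiemannInt pr = Gp K HK b - Gp K HK a.
Proof.
  intros Ha Hb Hab.
  rewrite (RiemannInt_P18 pr (gK_int K HK a b) Hab).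
  - apply Gp_int; lra.
  - intros x Hx. symmetry. apply gK_hint; auto. lra.
Qed.

Lemma hint_val K (HK : 0 < K) a b (pr : Riemann_integrable (hint K) a b) :
  -1 <= a <= 1 -> -1 <= b <= 1 -> RiemannInt pr = Gp K HK b - Gp K HK a.
Proof.
  intros Ha Hb. destruct (Rle_dec a b) as [H|H].
  - apply hint_val_le; auto.
  - rewrite (RiemannInt_P8 pr (RiemannInt_P1 pr)). rewrite (hint_val_le K HK b a); auto; lra.
Qed.

Lemma Gp_odd K HK u : -1 <= u <= 1 -> Gp K HK u + Gp K HK (- u) = 2 * Gp K HK 0.
Proof.
  intro Hu.
  assert (H := const_open (fun u => Gp K HK u + Gp K HK (- u)) (-2) 2).
  replace (2 * Gp K HK 0) with (Gp K HK 0 + Gp K HK (- 0)) by (rewrite Ropp_0; ring).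
  apply H; try lra.
  intros x Hx. eapply D_val. apply D_plus. apply Gp_deriv; lra.
  apply (D_comp (fun u => - u)). apply D_opp, D_id. apply Gp_deriv; lra.
  rewrite gK_even. ring.
Qed.

Lemma angle a b : cos a = cos b -> sin a = sin b -> exists n : Z, a = b + 2 * IZR n * PI.
Proof.
  intros Hc Hs.
  assert (H1 : cos (a - b) = 1).
  { rewrite cos_minus, Hc, Hs. generalize (sin2_cos2 b). unfold Rsqr. lra. }
  set (x := (a - b) / 2).
  assert (H2 : sin x = 0).
  { assert (E := cos_2a_sin x). replace (2 * x) with (a - b) in E by (unfold x; field).
    rewrite H1 in E. nra. }
  destruct (sin_eq_0_0 x H2) as [n Hn]. exists n. unfold x in Hn. lra.
Qed.

Lemma const_closed f a b : a < b -> (forall x, a < x < b -> derivable_pt_lim f x 0) ->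
  continuity_pt f a -> continuity_pt f b -> forall x, a <= x <= b -> f x = f a.
Proof.
  intros Hab Hd Ca Cb.
  set (m := (a + b) / 2).
  assert (Hin : forall x, a < x < b -> f x = f m) by (intros; apply const_open with a b; auto; unfold m; lra).
  assert (Ea : f a = f m).
  { apply Rle_antisym.
    - assert (H : - f m <= - f a).
      { apply (lim_ge_right (fun t => - f t) a (b - a)). apply continuity_pt_opp. exact Ca. lra.
        intros s Hs. cbv beta. rewrite (Hin s); lra. }
      lra.
    - apply (lim_ge_right f a (b - a)); auto. lra. intros s Hs. cbv beta. rewrite (Hin s); lra. }
  assert (Eb : f b = f m).
  { apply Rle_antisym.
    - assert (H : - f m <= - f b).
      { apply (lim_ge_left (fun t => - f t) b (b - a)). apply continuity_pt_opp. exact Cb. lra.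
        intros s Hs. cbv beta. rewrite (Hin s); lra. }
      lra.
    - apply (lim_ge_left f b (b - a)); auto. lra. intros s Hs. cbv beta. rewrite (Hin s); lra. }
  intros x Hx. rewrite Ea.
  destruct (Req_dec x a) as [->|]; [auto|]. destruct (Req_dec x b) as [->|]; [auto|].
  apply Hin; lra.
Qed.

Section Main.
Variables (K L : R) (k h dk dh : R -> R).
Hypotheses (HK : 0 < K) (HL : 0 < L)
  (Hdk : forall s, 0 <= s <= L -> derivable_pt_lim k s (dk s))
  (Hdh : forall s, 0 <= s <= L -> derivable_pt_lim h s (dh s))
  (Harc : forall s, 0 <= s <= L -> dk s ^ 2 + dh s ^ 2 = 1)
  (Hk0 : k 0 = 0) (HkL : k L = 0)
  (Hkpos : forall s, 0 < s < L -> 0 < k s)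
  (Hdk0 : dk 0 = 1) (HdkL : dk L = -1)
  (Hlow : forall s, 0 <= s <= L -> h 0 <= h s)
  (Hcurv : ext_curvature_const (psi k h) (fun s _ => 0 < s < L) K).

Lemma ode_interior s : 0 < s < L ->
  derivable_pt_lim dk s (- K * (sinh (k s) / cosh (k s))) /\
  exists b', derivable_pt_lim dh s b'.
Proof.
  intros Hs.
  destruct Hcurv as (Fs & Fv & Fss & Fsv & Fvv & Hd & Hc).
  assert (HI : forall t, 0 < t < L -> 0 <= t <= L) by (intros; lra).
  assert (HFs : forall t v, 0 < t < L ->
     c1 (Fs t v) = sinh (k t) * dk t /\ c2 (Fs t v) = cosh (k t) * dk t * cos v /\
     c3 (Fs t v) = cosh (k t) * dk t * sin v /\ c4 (Fs t v) = dh t).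
  { intros t v Ht. destruct (Hd t v Ht) as [[H1 [H2 [H3 H4]]] _].
    unfold psi in H1, H2, H3, H4; simpl in H1, H2, H3, H4.
    assert (Dk := Hdk t (HI t Ht)).
    repeat split.
    - eapply D_uniq; [exact H1|]. apply (D_comp k cosh); [exact Dk|apply derivable_pt_lim_cosh].
    - eapply D_uniq; [exact H2|]. eapply D_val.
      apply (D_mult (fun t => sinh (k t)) (fun _ => cos v)).
      apply (D_comp k sinh); [exact Dk|apply derivable_pt_lim_sinh]. apply D_const. ring.
    - eapply D_uniq; [exact H3|]. eapply D_val.
      apply (D_mult (fun t => sinh (k t)) (fun _ => sin v)).
      apply (D_comp k sinh); [exact Dk|apply derivable_pt_lim_sinh]. apply D_const. ring.
    - eapply D_uniq; [exact H4|]. apply Hdh; lra. }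
  assert (HFv : forall t v, 0 < t < L ->
     c1 (Fv t v) = 0 /\ c2 (Fv t v) = - (sinh (k t) * sin v) /\
     c3 (Fv t v) = sinh (k t) * cos v /\ c4 (Fv t v) = 0).
  { intros t v Ht. destruct (Hd t v Ht) as [_ [[H1 [H2 [H3 H4]]] _]].
    unfold psi in H1, H2, H3, H4; simpl in H1, H2, H3, H4.
    repeat split.
    - eapply D_uniq; [exact H1|]. apply D_const.
    - eapply D_uniq; [exact H2|]. eapply D_val.
      apply (D_mult (fun _ => sinh (k t)) cos). apply D_const. apply derivable_pt_lim_cos. ring.
    - eapply D_uniq; [exact H3|]. eapply D_val.
      apply (D_mult (fun _ => sinh (k t)) sin). apply D_const. apply derivable_pt_lim_sin. ring.
    - eapply D_uniq; [exact H4|]. apply D_const. }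
  destruct (Hd s 0 Hs) as [_ [_ [[S1 [S2 [S3 S4]]] [[T1 [T2 [T3 T4]]] [V1 [V2 [V3 V4]]]]]]].
  set (S := sinh (k s)). set (C := cosh (k s)). set (a := dk s). set (b := dh s).
  assert (HS : 0 < S) by (apply sinh_pos; apply Hkpos; exact Hs).
  assert (HC : 0 < C) by apply cosh_pos.
  assert (HCS : C^2 - S^2 = 1) by apply ch_sh.
  assert (Hab : a^2 + b^2 = 1) by (apply Harc; lra).
  set (l1 := c1 (Fss s 0)).
  assert (D1 : derivable_pt_lim (fun t => sinh (k t) * dk t) s l1).
  { eapply D_loc with (a:=0) (b:=L); [exact Hs| |exact S1].
    intros z Hz. simpl. apply HFs; auto. }
  assert (DS : derivable_pt_lim (fun t => sinh (k t)) s (C * a)).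
  { apply (D_comp k sinh). apply Hdk; lra. apply derivable_pt_lim_sinh. }
  set (a' := (l1 - C * a * a) / S).
  assert (Da : derivable_pt_lim dk s a').
  { eapply D_loc with (a:=0) (b:=L) (f := fun t => (sinh (k t) * dk t) / sinh (k t)); [exact Hs| |].
    - intros z Hz. field. apply Rgt_not_eq. apply sinh_pos. apply Hkpos; auto.
    - eapply D_val. apply (D_div _ _ _ _ _ D1 DS). apply Rgt_not_eq; exact HS.
      unfold a'. fold S a. field. apply Rgt_not_eq; exact HS. }
  set (b' := c4 (Fss s 0)).
  assert (Db : derivable_pt_lim dh s b').
  { eapply D_loc with (a:=0) (b:=L); [exact Hs| |exact S4].
    intros z Hz. simpl. apply HFs; auto. }
  split; [|exists b'; exact Db].
  assert (Hab' : a * a' + b * b' = 0).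
  { assert (D2 : derivable_pt_lim (fun t => dk t ^ 2 + dh t ^ 2) s (2 * a * a' + 2 * b * b')).
    { eapply D_val. apply D_plus; apply D_sq; eassumption. fold a b. ring. }
    assert (D3 : derivable_pt_lim (fun t => dk t ^ 2 + dh t ^ 2) s 0).
    { eapply D_loc with (a:=0) (b:=L) (f := fun _ => 1); [exact Hs| |apply D_const].
      intros z Hz. symmetry. apply Harc. lra. }
    generalize (D_uniq _ _ _ _ D2 D3). lra. }
  assert (E1 : c1 (Fss s 0) = C * a * a + S * a') by (unfold a'; fold l1; field; lra).
  assert (E2 : c2 (Fss s 0) = S * a * a + C * a').
  { eapply D_uniq; [exact S2|]. eapply D_loc with (a:=0) (b:=L) (f := fun t => cosh (k t) * dk t * cos 0);
     [exact Hs| intros z Hz; symmetry; apply HFs; auto |].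
    eapply D_val. apply (D_mult _ (fun _ => cos 0)). apply (D_mult (fun t => cosh (k t)) dk).
    apply (D_comp k cosh). apply Hdk; lra. apply derivable_pt_lim_cosh. exact Da. apply D_const.
    rewrite cos_0. fold S C a. ring. }
  assert (E3 : c3 (Fss s 0) = 0).
  { eapply D_uniq; [exact S3|]. eapply D_loc with (a:=0) (b:=L) (f := fun t => cosh (k t) * dk t * sin 0);
     [exact Hs| intros z Hz; symmetry; apply HFs; auto |].
    rewrite sin_0. eapply D_val. apply (D_mult _ (fun _ => 0)). apply (D_mult (fun t => cosh (k t)) dk).
    apply (D_comp k cosh). apply Hdk; lra. apply derivable_pt_lim_cosh. exact Da. apply D_const.
    ring. }
  assert (G1 : c1 (Fsv s 0) = 0).
  { eapply D_uniq; [exact T1|]. eapply D_loc with (a:=0) (b:=L) (f := fun t => 0);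
     [exact Hs| intros z Hz; symmetry; apply HFv; auto | apply D_const]. }
  assert (G2 : c2 (Fsv s 0) = 0).
  { eapply D_uniq; [exact T2|]. eapply D_loc with (a:=0) (b:=L) (f := fun t => 0);
     [exact Hs| intros z Hz; symmetry; rewrite (proj1 (proj2 (HFv z 0 Hz))); rewrite sin_0; ring | apply D_const]. }
  assert (G4 : c4 (Fsv s 0) = 0).
  { eapply D_uniq; [exact T4|]. eapply D_loc with (a:=0) (b:=L) (f := fun t => 0);
     [exact Hs| intros z Hz; symmetry; apply HFv; auto | apply D_const]. }
  assert (W1 : c1 (Fvv s 0) = 0).
  { eapply D_uniq; [exact V1|]. eapply D_loc with (a:=-1) (b:=1) (f := fun t => 0);
     [lra| intros z Hz; symmetry; apply HFv; auto | apply D_const]. }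
  assert (W2 : c2 (Fvv s 0) = - S).
  { eapply D_uniq; [exact V2|]. eapply D_loc with (a:=-1) (b:=1) (f := fun v => - (sinh (k s) * sin v));
     [lra| intros z Hz; symmetry; apply HFv; auto |].
    eapply D_val. apply D_opp. apply (D_mult (fun _ => sinh (k s)) sin). apply D_const.
    apply derivable_pt_lim_sin. rewrite cos_0. fold S. ring. }
  assert (W3 : c3 (Fvv s 0) = 0).
  { eapply D_uniq; [exact V3|]. eapply D_loc with (a:=-1) (b:=1) (f := fun v => sinh (k s) * cos v);
     [lra| intros z Hz; symmetry; apply HFv; auto |].
    eapply D_val. apply (D_mult (fun _ => sinh (k s)) cos). apply D_const.
    apply derivable_pt_lim_cos. rewrite sin_0. ring. }
  assert (W4 : c4 (Fvv s 0) = 0).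
  { eapply D_uniq; [exact V4|]. eapply D_loc with (a:=-1) (b:=1) (f := fun t => 0);
     [lra| intros z Hz; symmetry; apply HFv; auto | apply D_const]. }
  destruct (HFs s 0 Hs) as [F1 [F2 [F3 F4]]].
  destruct (HFv s 0 Hs) as [U1 [U2 [U3 U4]]].
  rewrite cos_0, sin_0 in *.
  fold S C a b in F1, F2, F3, F4, U1, U2, U3, U4.
  set (N := mkR4 (b * S) (b * C) 0 (- a)).
  assert (HN : unit_normal_HxR (psi k h s 0) (Fs s 0) (Fv s 0) N).
  { unfold unit_normal_HxR, lor, N, psi; simpl.
    rewrite F1, F2, F3, F4, U1, U2, U3, U4. try rewrite cos_0. try rewrite sin_0. fold S C.
    repeat split.
    - ring.
    - transitivity (a*b*(C^2 - S^2 - 1)); [ring | rewrite HCS; ring].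
    - ring.
    - transitivity (b^2*(C^2 - S^2) + a^2); [ring | rewrite HCS; lra]. }
  generalize (Hc s 0 N Hs HN). unfold lor, N; simpl.
  rewrite F1, F2, F3, F4, U1, U2, U3, U4, E1, E2, E3, G1, G2, G4, W1, W2, W3, W4.
  intro HK'.
  fold b' in HK'.
  match type of HK' with (?n / ?d = _) =>
    assert (Hn : n = - (b * a' - a * b') * b * S * C) by
      (transitivity ((a' * b * (C^2 - S^2) - b' * a) * (-(S * b * C))); [ring | rewrite HCS; ring]);
    assert (Hd' : d = S ^ 2) by (transitivity (S^2 * ((C^2 - S^2) * a^2 + b^2)); [ring | rewrite HCS; nra]);
    rewrite Hn, Hd' in HK'
  end.
  assert (HK2 : - (b * a' - a * b') * b * C = K * S).
  { apply Rmult_eq_reg_r with S; [|lra]. rewrite <- HK'. field. lra. }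
  assert (E : -(b*a' - a*b')*b*C = -a'*C*(a^2+b^2) + a*C*(a*a' + b*b')) by ring.
  rewrite Hab, Hab' in E.
  assert (HK3 : - a' * C = K * S) by lra.
  apply D_val with a'; [exact Da|]. fold S C. field_simplify; [|lra]. 
  apply Rmult_eq_reg_r with C; [|lra]. field_simplify; [|lra]. nra.
Qed.

Definition lc t := 2 * K * ln (cosh (k t)).

Lemma lc_deriv t : 0 <= t <= L ->
  derivable_pt_lim lc t (2 * K * (sinh (k t) / cosh (k t) * dk t)).
Proof.
  intro Ht. unfold lc. eapply D_val.
  apply (D_mult (fun _ => 2 * K) (fun t => ln (cosh (k t)))). apply D_const.
  apply (D_comp (fun t => cosh (k t)) ln).
  apply (D_comp k cosh). apply Hdk; auto. apply derivable_pt_lim_cosh.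
  apply derivable_pt_lim_ln. apply cosh_pos.
  field. generalize (cosh_pos (k t)); lra.
Qed.

Lemma lc_0 : lc 0 = 0.
Proof. unfold lc. rewrite Hk0, cosh_0, ln_1. ring. Qed.
Lemma lc_L : lc L = 0.
Proof. unfold lc. rewrite HkL, cosh_0, ln_1. ring. Qed.
Lemma lc_nneg t : 0 <= lc t.
Proof. unfold lc. assert (0 <= ln (cosh (k t))).
  { destruct (cosh_ge1 (k t)) as [H|H]. left. rewrite <- ln_1. apply ln_increasing; lra.
    rewrite <- H, ln_1; lra. }
  nra. Qed.

Lemma energy : forall s, 0 <= s <= L -> dk s ^ 2 + lc s = 1.
Proof.
  set (Phi := fun t => dk t ^ 2 + lc t).
  assert (Hc : forall x y, 0 < x < L -> 0 < y < L -> Phi x = Phi y).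
  { apply const_open. intros x Hx. unfold Phi. eapply D_val.
    apply D_plus. apply D_sq. apply (proj1 (ode_interior x Hx)). apply lc_deriv. lra.
    field. generalize (cosh_pos (k x)); lra. }
  set (c := Phi (L/2)).
  assert (Hc' : forall x, 0 < x < L -> Phi x = c) by (intros; apply Hc; lra).
  assert (Hle : c <= 1).
  { assert (H : c - 1 <= lc 0).
    { apply lim_ge_right with L. apply D_cont with (2 * K * (sinh (k 0) / cosh (k 0) * dk 0)).
      apply lc_deriv; lra. lra.
      intros s Hs. rewrite <- (Hc' s) by lra. unfold Phi.
      assert (Ha := Harc s ltac:(lra)). generalize (pow2_ge_0 (dh s)). lra. }
    rewrite lc_0 in H. lra. }
  assert (Hge : 1 <= c).
  { replace 1 with (1 ^ 2) by ring. apply deriv_sq_bound with k L.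
    rewrite <- Hdk0. apply Hdk; lra. exact Hk0. exact HL.
    intros s Hs. destruct (MVT_cor2 k dk 0 s) as [xi [Hxi Hxi']]; [lra| intros; apply Hdk; lra |].
    rewrite Hk0 in Hxi. replace (k s / s) with (dk xi) by (replace (k s) with (dk xi * (s - 0)) by lra; field; lra).
    rewrite <- (Hc' xi) by lra. unfold Phi. generalize (lc_nneg xi); lra. }
  intros s Hs.
  destruct (Req_dec s 0) as [->|H0]. rewrite Hdk0, lc_0; ring.
  destruct (Req_dec s L) as [->|H1]. rewrite HdkL, lc_L; ring.
  change (Phi s = 1). rewrite Hc'; lra.
Qed.


Lemma lc_pos t : 0 < t < L -> 0 < lc t.
Proof. intro Ht. unfold lc. assert (0 < ln (cosh (k t))).
  { rewrite <- ln_1. apply ln_increasing. lra. apply cosh_gt1. apply Hkpos; auto. }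
  nra. Qed.

Lemma dk_sq_lt s : 0 < s < L -> dk s ^ 2 < 1.
Proof. intro Hs. generalize (energy s ltac:(lra)) (lc_pos s Hs). lra. Qed.

Lemma k_nneg s : 0 <= s <= L -> 0 <= k s.
Proof. intro Hs. destruct (Req_dec s 0) as [->|H0]. rewrite Hk0; lra.
  destruct (Req_dec s L) as [->|H1]. rewrite HkL; lra. left; apply Hkpos; lra. Qed.

Lemma k_formula s : 0 <= s <= L -> k s = arccosh (exp ((1 - dk s ^ 2) / (2 * K))).
Proof.
  intro Hs. assert (E := energy s Hs). unfold lc in E.
  replace ((1 - dk s ^ 2) / (2 * K)) with (ln (cosh (k s))) by (replace (1 - dk s ^ 2) with (2 * K * ln (cosh (k s))) by lra; field; lra).
  rewrite exp_ln by apply cosh_pos. symmetry; apply arccosh_cosh. apply k_nneg; auto.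
Qed.

Lemma dk_deriv_neg s : 0 < s < L -> - K * (sinh (k s) / cosh (k s)) < 0.
Proof. intro Hs. assert (0 < sinh (k s) / cosh (k s)).
  { apply Rdiv_lt_0_compat. apply sinh_pos, Hkpos; auto. apply cosh_pos. }
  nra. Qed.

Lemma dk_dec s1 s2 : 0 <= s1 -> s1 < s2 -> s2 <= L -> dk s2 < dk s1.
Proof.
  intros H1 H12 H2.
  destruct (Req_dec s1 0) as [->|N1].
  - rewrite Hdk0. destruct (Req_dec s2 L) as [->|N2]. rewrite HdkL; lra.
    generalize (dk_sq_lt s2 ltac:(lra)). nra.
  - destruct (Req_dec s2 L) as [->|N2].
    + rewrite HdkL. generalize (dk_sq_lt s1 ltac:(lra)). nra.
    + destruct (MVT_cor2 dk (fun t => - K * (sinh (k t) / cosh (k t))) s1 s2 H12) as [c [Hc Hc']].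
      * intros c Hc. apply ode_interior. lra.
      * generalize (dk_deriv_neg c ltac:(lra)). nra.
Qed.

Lemma lc_cont t : 0 <= t <= L -> continuity_pt lc t.
Proof. intro Ht. eapply D_cont. apply lc_deriv; auto. Qed.

Lemma dk_right0 eps : 0 < eps -> exists d, 0 < d <= L /\ forall t, 0 < t < d -> Rabs (dk t - 1) < eps.
Proof.
  intro He. set (d0 := dk (L/2)).
  assert (Hd0 : d0 ^ 2 < 1) by (apply dk_sq_lt; lra).
  destruct (cont_get lc 0 (lc_cont 0 ltac:(lra)) (Rmin eps (1 - d0^2))) as [d1 [Hd1 Hd1']].
  { apply Rmin_pos; lra. }
  exists (Rmin d1 (L/2)). split. split. apply Rmin_pos; lra. generalize (Rmin_r d1 (L/2)); lra.
  intros t Ht. assert (Ht1 : t < d1) by (generalize (Rmin_l d1 (L/2)); lra).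
  assert (Ht2 : t < L/2) by (generalize (Rmin_r d1 (L/2)); lra).
  specialize (Hd1' t ltac:(rewrite Rminus_0_r, Rabs_right; lra)). rewrite lc_0 in Hd1'.
  replace (lc t - 0) with (lc t) in Hd1' by ring. rewrite Rabs_right in Hd1' by (generalize (lc_nneg t); lra).
  assert (Hm1 := Rmin_l eps (1 - d0^2)). assert (Hm2 := Rmin_r eps (1 - d0^2)).
  assert (E := energy t ltac:(lra)).
  assert (Hdec : d0 < dk t) by (apply dk_dec; lra).
  assert (Hsq : dk t ^ 2 < 1) by (apply dk_sq_lt; lra).
  assert (Hpos : 0 <= dk t).
  { destruct (Rle_lt_dec 0 (dk t)) as [|Hn]; auto. exfalso. nra. }
  rewrite Rabs_left1 by nra. nra.
Qed.

Lemma dk_leftL eps : 0 < eps -> exists d, 0 < d <= L /\ forall t, L - d < t < L -> Rabs (dk t + 1) < eps.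
Proof.
  intro He. set (d0 := dk (L/2)).
  assert (Hd0 : d0 ^ 2 < 1) by (apply dk_sq_lt; lra).
  destruct (cont_get lc L (lc_cont L ltac:(lra)) (Rmin eps (1 - d0^2))) as [d1 [Hd1 Hd1']].
  { apply Rmin_pos; lra. }
  exists (Rmin d1 (L/2)). split. split. apply Rmin_pos; lra. generalize (Rmin_r d1 (L/2)); lra.
  intros t Ht. assert (Ht1 : L - t < d1) by (generalize (Rmin_l d1 (L/2)); lra).
  assert (Ht2 : L/2 < t) by (generalize (Rmin_r d1 (L/2)); lra).
  specialize (Hd1' t ltac:(rewrite Rabs_left; lra)). rewrite lc_L in Hd1'.
  replace (lc t - 0) with (lc t) in Hd1' by ring. rewrite Rabs_right in Hd1' by (generalize (lc_nneg t); lra).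
  assert (Hm1 := Rmin_l eps (1 - d0^2)). assert (Hm2 := Rmin_r eps (1 - d0^2)).
  assert (E := energy t ltac:(lra)).
  assert (Hdec : dk t < d0) by (apply dk_dec; lra).
  assert (Hsq : dk t ^ 2 < 1) by (apply dk_sq_lt; lra).
  assert (Hneg : dk t <= 0).
  { destruct (Rle_lt_dec (dk t) 0) as [|Hn]; auto. exfalso. nra. }
  rewrite Rabs_right by nra. nra.
Qed.

Lemma dh_cont_int s : 0 < s < L -> continuity_pt dh s.
Proof. intro Hs. destruct (ode_interior s Hs) as [_ [b' Hb]]. eapply D_cont; eauto. Qed.

Lemma dk_cont_int s : 0 < s < L -> continuity_pt dk s.
Proof. intro Hs. destruct (ode_interior s Hs) as [Ha _]. eapply D_cont; eauto. Qed.

Lemma dh_sq s : 0 < s < L -> 0 < dh s ^ 2.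
Proof. intro Hs. generalize (Harc s ltac:(lra)) (dk_sq_lt s Hs). lra. Qed.

Lemma dh_pos s : 0 < s < L -> 0 < dh s.
Proof.
  intro Hs. destruct (Rlt_le_dec 0 (dh s)) as [|Hle]; auto. exfalso.
  assert (Hneg : dh s < 0) by (destruct Hle as [|E]; auto; generalize (dh_sq s Hs); rewrite E; lra).
  assert (Hall : forall t, 0 < t <= s -> dh t < 0).
  { intros t Ht. destruct (Req_dec t s) as [->|Hts]; auto.
    destruct (Rlt_le_dec (dh t) 0) as [|Hle']; auto. exfalso.
    assert (Hpos : 0 < dh t) by (destruct Hle' as [|E]; auto; generalize (dh_sq t ltac:(lra)); rewrite <- E; lra).
    destruct (IVT_interv (fun x => - dh x) t s) as [z [Hz Hz']].
    - intros a Ha. apply continuity_pt_opp. apply dh_cont_int. lra.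
    - lra.
    - lra.
    - lra.
    - generalize (dh_sq z ltac:(lra)). nra. }
  destruct (MVT_cor2 h dh 0 s) as [xi [Hxi Hxi']]. lra. intros; apply Hdh; lra.
  assert (dh xi < 0) by (apply Hall; lra).
  assert (h s < h 0) by nra.
  generalize (Hlow s ltac:(lra)). lra.
Qed.

Lemma h_inc s1 s2 : 0 <= s1 -> s1 < s2 -> s2 <= L -> h s1 < h s2.
Proof.
  intros H1 H12 H2.
  destruct (MVT_cor2 h dh s1 s2) as [xi [Hxi Hxi']]. lra. intros; apply Hdh; lra.
  assert (0 < dh xi) by (apply dh_pos; lra). nra.
Qed.

Definition cl t := Rmax 0 (Rmin L t).

Lemma cl_id t : 0 <= t <= L -> cl t = t.
Proof. intro Ht. unfold cl, Rmax, Rmin. repeat destruct Rle_dec; lra. Qed.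

Lemma cl_range t : 0 <= cl t <= L.
Proof. unfold cl, Rmax, Rmin. repeat destruct Rle_dec; lra. Qed.

Lemma cl_lip x y : Rabs (cl x - cl y) <= Rabs (x - y).
Proof. unfold cl, Rmax, Rmin. repeat destruct Rle_dec; unfold Rabs; repeat destruct Rcase_abs; lra. Qed.

Lemma cl_cont x : continuity_pt cl x.
Proof. apply cont_mk. intros eps He. exists eps. split; auto. intros y Hy.
  eapply Rle_lt_trans; [apply cl_lip|exact Hy]. Qed.

Lemma dk_range s : 0 <= s <= L -> -1 <= dk s <= 1.
Proof. intro Hs. generalize (energy s Hs) (lc_nneg s). intros. nra. Qed.

Lemma dkc_cont x : 0 <= x <= L -> continuity_pt (fun t => dk (cl t)) x.
Proof.
  intro Hx.
  destruct (Req_dec x 0) as [->|H0].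
  - apply cont_mk. intros eps He. destruct (dk_right0 eps He) as [d [Hd Hd']].
    exists d. split; [lra|]. intros t Ht. rewrite (cl_id 0) by lra. rewrite Hdk0.
    rewrite Rminus_0_r in Ht.
    destruct (Rle_dec t 0) as [Hle|Hgt].
    + replace (cl t) with 0 by (unfold cl, Rmax, Rmin; repeat destruct Rle_dec; lra).
      rewrite Hdk0. replace (1 - 1) with 0 by ring. rewrite Rabs_R0; lra.
    + rewrite Rabs_right in Ht by lra. rewrite cl_id by lra. apply Hd'. lra.
  - destruct (Req_dec x L) as [->|H1].
    + apply cont_mk. intros eps He. destruct (dk_leftL eps He) as [d [Hd Hd']].
      exists d. split; [lra|]. intros t Ht. rewrite (cl_id L) by lra. rewrite HdkL.
      destruct (Rle_dec L t) as [Hle|Hgt].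
      * replace (cl t) with L by (unfold cl, Rmax, Rmin; repeat destruct Rle_dec; lra).
        rewrite HdkL. replace (-1 - -1) with 0 by ring. rewrite Rabs_R0; lra.
      * rewrite Rabs_left in Ht by lra. rewrite cl_id by lra.
        replace (dk t - -1) with (dk t + 1) by ring. apply Hd'. lra.
    + apply continuity_pt_locally_ext with (f := dk) (a := Rmin x (L - x)).
      * apply Rmin_pos; lra.
      * intros y Hy. unfold Rdist in Hy. rewrite cl_id; auto.
        generalize (Rmin_l x (L - x)) (Rmin_r x (L - x)). intros.
        apply Rabs_def2 in Hy. lra.
      * apply dk_cont_int. lra.
Qed.


Lemma hint_dk s : 0 < s < L -> gK K (dk s) * (sinh (k s) / cosh (k s)) = dh s.
Proof.
  intro Hs.
  assert (Hsq := dk_sq_lt s Hs).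
  rewrite gK_hint by (auto; nra). unfold hint.
  set (S := sinh (k s)). set (C := cosh (k s)).
  assert (HS : 0 < S) by (apply sinh_pos; apply Hkpos; exact Hs).
  assert (HC : 0 < C) by apply cosh_pos.
  assert (HCS : C^2 - S^2 = 1) by apply ch_sh.
  assert (Hb := dh_pos s Hs).
  assert (E1 : 1 - dk s ^ 2 = dh s ^ 2) by (generalize (Harc s ltac:(lra)); lra).
  assert (E0 : dh s ^ 2 = 2 * K * ln C) by (generalize (energy s ltac:(lra)); unfold lc; fold C; lra).
  rewrite E1, sqrt_pow2 by lra.
  assert (E2 : exp (- (dh s ^ 2 / K)) = / (C * C)).
  { replace (- (dh s ^ 2 / K)) with (- (ln C + ln C)) by (rewrite E0; field; lra).
    rewrite exp_Ropp, exp_plus, exp_ln by lra. reflexivity. }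
  rewrite E2.
  replace (1 - / (C * C)) with ((S / C) ^ 2) by (symmetry; transitivity ((C^2 - 1) / (C * C)); [field; lra| replace (C^2 - 1) with (S^2) by lra; field; lra]).
  rewrite sqrt_pow2 by (apply Rlt_le, Rdiv_lt_0_compat; lra).
  field. lra.
Qed.

Definition Hf t := h (cl t) + / K * (Gp K HK (dk (cl t)) - Gp K HK 1).

Lemma Hf_deriv x : 0 < x < L -> derivable_pt_lim Hf x 0.
Proof.
  intro Hx.
  apply D_loc with (a := 0) (b := L) (f := fun t => h t + / K * (Gp K HK (dk t) - Gp K HK 1)); auto.
  { intros z Hz. unfold Hf. rewrite cl_id by lra. reflexivity. }
  eapply D_val. apply D_plus. apply Hdh; lra.
  apply (D_mult (fun _ => / K)). apply D_const. apply D_minus; [|apply D_const].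
  apply (D_comp dk). apply (proj1 (ode_interior x Hx)). apply Gp_deriv.
  generalize (dk_range x ltac:(lra)); lra.
  rewrite <- (hint_dk x Hx). assert (cosh (k x) <> 0) by (apply Rgt_not_eq, cosh_pos). field. split; [auto|lra].
Qed.

Lemma Hf_cont x : 0 <= x <= L -> continuity_pt Hf x.
Proof.
  intro Hx. unfold Hf. apply C_plus.
  - apply (C_comp cl h). apply cl_cont. eapply D_cont. apply Hdh. apply cl_range.
  - apply C_mult. apply C_const. apply C_minus; [|apply C_const].
    apply (C_comp (fun t => dk (cl t)) (Gp K HK)). apply dkc_cont; auto.
    eapply D_cont. apply Gp_deriv. generalize (dk_range (cl x) (cl_range x)). lra.
Qed.

Lemma h_formula s : 0 <= s <= L -> h s = h 0 - / K * (Gp K HK (dk s) - Gp K HK 1).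
Proof.
  intro Hs.
  assert (E := const_closed Hf 0 L HL Hf_deriv (Hf_cont 0 ltac:(lra)) (Hf_cont L ltac:(lra)) s Hs).
  unfold Hf in E. rewrite !cl_id in E by lra. rewrite Hdk0 in E. lra.
Qed.


Lemma find_sp u : -1 <= u <= 1 -> exists s', 0 <= s' <= L /\ dk s' = - u.
Proof.
  intro Hu.
  destruct (Req_dec u 1) as [->|H1]. exists L. split. lra. exact HdkL.
  destruct (Req_dec u (-1)) as [->|H2]. exists 0. split. lra. rewrite Hdk0; ring.
  destruct (IVT_interv (fun t => - dk (cl t) - u) 0 L) as [z [Hz Hz']].
  - intros a Ha. apply C_minus. apply continuity_pt_opp. apply dkc_cont; auto. apply C_const.
  - exact HL.
  - rewrite cl_id, Hdk0 by lra. lra.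
  - rewrite cl_id, HdkL by lra. lra.
  - exists z. split; auto. rewrite cl_id in Hz' by lra. lra.
Qed.

Lemma sym s v : 0 <= s <= L ->
  exists s', 0 <= s' <= L /\
    psi k h s' v = reflect_slice (/ K * (Gp K HK 0 - Gp K HK (-1)) + h 0) (psi k h s v).
Proof.
  intro Hs. destruct (find_sp (dk s) (dk_range s Hs)) as [s' [Hs' E]].
  exists s'. split; auto.
  assert (Ek : k s' = k s).
  { rewrite (k_formula s' Hs'), (k_formula s Hs), E. f_equal. f_equal. f_equal. ring. }
  unfold psi, reflect_slice; simpl. rewrite Ek. f_equal.
  rewrite (h_formula s' Hs'), (h_formula s Hs), E.
  assert (O1 := Gp_odd K HK (dk s) (dk_range s Hs)).
  assert (O2 := Gp_odd K HK 1 ltac:(lra)).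
  replace (Gp K HK (-1)) with (Gp K HK (- (1))) by (f_equal; ring).
  replace (Gp K HK (- dk s)) with (2 * Gp K HK 0 - Gp K HK (dk s)) by lra.
  replace (Gp K HK (- (1))) with (2 * Gp K HK 0 - Gp K HK 1) by lra.
  ring.
Qed.

Lemma embed s1 s2 v1 v2 : 0 <= s1 <= L -> 0 <= s2 <= L ->
  psi k h s1 v1 = psi k h s2 v2 ->
  s1 = s2 /\ (s1 = 0 \/ s1 = L \/ exists n : Z, v1 = v2 + 2 * IZR n * PI).
Proof.
  intros H1 H2 E. unfold psi in E. injection E as E1 E2 E3 E4.
  assert (Es : s1 = s2).
  { destruct (Rtotal_order s1 s2) as [Hlt|[Heq|Hgt]]; auto.
    - generalize (h_inc s1 s2 ltac:(lra) Hlt ltac:(lra)). lra.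
    - generalize (h_inc s2 s1 ltac:(lra) Hgt ltac:(lra)). lra. }
  split; auto. subst s2.
  destruct (Req_dec s1 0) as [->|N0]; [left; auto|].
  destruct (Req_dec s1 L) as [->|NL]; [right; left; auto|].
  right; right. assert (HS : 0 < sinh (k s1)) by (apply sinh_pos, Hkpos; lra).
  apply angle.
  - apply Rmult_eq_reg_l with (sinh (k s1)); lra.
  - apply Rmult_eq_reg_l with (sinh (k s1)); lra.
Qed.

End Main.

Theorem proposition5p1
  (K L : R) (k h dk dh : R -> R)
  (HK : 0 < K) (HL : 0 < L)
  (Hdk : forall s, 0 <= s <= L -> derivable_pt_lim k s (dk s))
  (Hdh : forall s, 0 <= s <= L -> derivable_pt_lim h s (dh s))
  (Harc : forall s, 0 <= s <= L -> dk s ^ 2 + dh s ^ 2 = 1)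
  (Hk0 : k 0 = 0) (HkL : k L = 0)
  (Hkpos : forall s, 0 < s < L -> 0 < k s)
  (Hdk0 : dk 0 = 1) (HdkL : dk L = -1)
  (Hlow : forall s, 0 <= s <= L -> h 0 <= h s)
  (Hcurv : ext_curvature_const (psi k h) (fun s _ => 0 < s < L) K) :
  (forall s1 s2 v1 v2, 0 <= s1 <= L -> 0 <= s2 <= L ->
     psi k h s1 v1 = psi k h s2 v2 ->
     s1 = s2 /\ (s1 = 0 \/ s1 = L \/ exists n : Z, v1 = v2 + 2 * IZR n * PI)) /\
  (forall s1 s2, 0 <= s1 -> s1 < s2 -> s2 <= L -> dk s2 < dk s1) /\
  (exists C : R,
     (forall s, 0 <= s <= L ->
        k s = arccosh (exp ((1 - dk s ^ 2) / (2 * K))) /\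
        exists pr : Riemann_integrable (hint K) 1 (dk s),
          h s = - (1 / K) * RiemannInt pr + C) /\
     exists pr0 : Riemann_integrable (hint K) (-1) 0,
       let h0 := (1 / K) * RiemannInt pr0 + C in
       forall s v, 0 <= s <= L ->
         exists s', 0 <= s' <= L /\ psi k h s' v = reflect_slice h0 (psi k h s v)).
Proof.
  split; [|split].
  - intros. apply (embed K L k h dk dh); assumption.
  - intros. apply (dk_dec K L k h dk dh); assumption.
  - exists (h 0). split.
    + intros s Hs. split. apply (k_formula K L k h dk dh); assumption.
      assert (Hr : -1 <= dk s <= 1) by (apply (dk_range K L k h dk dh); assumption).
      exists (hint_int K HK 1 (dk s) ltac:(lra) Hr).
      rewrite (hint_val K HK) by lra.
      assert (Hf : h s = h 0 - / K * (Gp K HK (dk s) - Gp K HK 1)) by (apply (h_formula K L k h dk dh); assumption).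
      rewrite Hf.
      field. lra.
    + exists (hint_int K HK (-1) 0 ltac:(lra) ltac:(lra)).
      intros h0 s v Hs. unfold h0. rewrite (hint_val K HK) by lra.
      replace (1 / K * (Gp K HK 0 - Gp K HK (-1)) + h 0) with (/ K * (Gp K HK 0 - Gp K HK (-1)) + h 0) by (field; lra).
      apply (sym K L k h dk dh); assumption.
Qed.
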